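(* Assume (A1), (A2), (A3) (see context), and suppose $$\lim_{k\to+\infty}\big\|\mathbb P(\xi(\Lambda_{1/2})=0\mid\mathcal T_k)-\mathbb P(\xi(\Lambda_{1/2})=0)\big\|_\infty=0 .$$ Then there is $c>0$ with $\mathbb P(\xi(\Lambda_\ell)=0)\le e^{-c\ell^d}$ for all $\ell\ge1$. In particular $\mathbb P$ satisfies Condition $C(\alpha)$ for every $\alpha>0$.
   Context: $\Lambda_a=[-a,a]^d$. $\mathcal N$ = locally finite subsets of $\mathbb R^d$, identified with counting measures ($\xi(A)=\#(\xi\cap A)$), $\sigma$-algebra generated by $\xi\mapsto\xi(A)$; $\tau_x\xi:=\xi-x$. $\mathrm{DT}(\xi)$: graph on $\xi$ whose edges are pairs of points with Voronoi cells sharing a $(d-1)$-dimensional face. $\mathcal T_a$ is the $\sigma$-algebra on $\mathcal N$ of events determined by $\xi\cap\Lambda_a^c$; $\|\cdot\|_\infty$ is the $L^\infty(\mathbb P)$ norm. Setting: $(\Omega,\mathcal F,\mathcal P)$ with measurable $\mathbb R^d$-action $(\theta_x)$; simple point process $\omega\mapsto\hat\omega$ with law $\mathbb P$; measurable symmetric conductances $c_{x,y}(\omega)\ge0$ vanishing off edges of $\mathrm{DT}(\hat\omega)$. (A1) $\mathcal P$ $\theta$-invariant, $\mathcal P(\hat\omega=\emptyset)=0$; (A2) $m:=\mathbb E[\xi([0,1]^d)]\in(0,\infty)$; (A3) on a $\theta$-invariant measurable full-measure set, $\widehat{\theta_x\omega}=\tau_x\hat\omega$ and $c_{y-x,z-x}(\theta_x\omega)=c_{y,z}(\omega)$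 for all $x$ and edges $\{y,z\}$. Condition $C(\alpha)$: $\exists\kappa>0$ with $\mathbb P(\xi(\Lambda_\ell)=0)\le\kappa\ell^{-\alpha}$ for all $\ell\ge1$. *)

(* Defs.v *)
From HB Require Import structures.
From mathcomp Require Import all_boot all_order all_algebra.
From mathcomp Require Import all_classical all_reals all_analysis.
From mathcomp Require Import measurable_realfun ess_sup_inf.
Set Implicit Arguments. Unset Strict Implicit. Unset Printing Implicit Defensive.
Import Order.TTheory GRing.Theory Num.Theory.
Import numFieldNormedType.Exports.
Local Open Scope classical_set_scope.
Local Open Scope ring_scope.

Section Defs.
Context {R : realType} {d : nat}.

Definition box (a : R) : set 'rV[R]_d :=
  [set x | forall i, - a <= x ord0 i <= a].

Definition unit_cube : set 'rV[R]_d := [set x | forall i, 0 <= x ord0 i <= 1].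

Definition borelRd : set (set 'rV[R]_d) := <<s [set U | open U] >>.

Definition npts (xi A : set 'rV[R]_d) : \bar R := (\esum_(x in xi `&` A) 1)%E.

Definition translate (xi : set 'rV[R]_d) (x : 'rV[R]_d) : set 'rV[R]_d :=
  [set y - x | y in xi].

Context {dO : measure_display} {Omega : measurableType dO}.

Definition simple_point_process (hat : Omega -> set 'rV[R]_d) : Prop :=
  (forall w a, finite_set (hat w `&` box a)) /\
  (forall A, borelRd A -> measurable_fun [set: Omega] ((fun w => npts (hat w) A) : Omega -> \bar R)).

Definition measurable_action (theta : 'rV[R]_d -> Omega -> Omega) : Prop :=
  (forall w, theta 0 w = w) /\
  (forall x y w, theta (x + y) w = theta x (theta y w)) /\
  (forall x, measurable_fun setT (theta x)) /\
  (forall B : set Omega, measurable B ->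
     <<s [set S | exists A C, borelRd A /\ measurable C /\ S = A `*` C] >>
       [set p | B (theta p.1 p.2)]).

Definition A1 (P : probability Omega R) (theta : 'rV[R]_d -> Omega -> Omega)
  (hat : Omega -> set 'rV[R]_d) : Prop :=
  (forall x B, measurable B -> P (theta x @^-1` B) = P B) /\
  P [set w | hat w = set0] = 0%E.

Definition A2 (P : probability Omega R) (hat : Omega -> set 'rV[R]_d) : Prop :=
  (0 < \int[P]_w npts (hat w) unit_cube < +oo)%E.

Definition A3 (P : probability Omega R) (theta : 'rV[R]_d -> Omega -> Omega)
  (hat : Omega -> set 'rV[R]_d) : Prop :=
  exists Omega0 : set Omega, measurable Omega0 /\ P Omega0 = 1%E /\
    (forall x w, Omega0 (theta x w) <-> Omega0 w) /\
    (forall x w, Omega0 w -> hat (theta x w) = translate (hat w) x).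

(* T_a pulled back to Omega: generated by omega |-> xi(A cap Lambda_a^c) *)
Definition tail_sigma (hat : Omega -> set 'rV[R]_d) (a : R) : set (set Omega) :=
  <<s [set S | exists A (E : set (\bar R)), borelRd A /\ measurable E /\
        S = (fun w => npts (hat w) (A `&` ~` box a)) @^-1` E] >>.

Definition cond_prob_version (P : probability Omega R) (G : set (set Omega))
  (V : set Omega) (g : Omega -> R) : Prop :=
  (forall Y : set R, measurable Y -> G (g @^-1` Y)) /\
  P.-integrable setT (EFin \o g) /\
  (forall B, G B -> (\int[P]_(w in B) (g w)%:E = P (V `&` B))%E).

Definition void_event (hat : Omega -> set 'rV[R]_d) (l : R) : set Omega :=
  [set w | npts (hat w) (box l) = 0%E].

Definition condC (P : probability Omega R) (hat : Omega -> set 'rV[R]_d)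
  (alpha : R) : Prop :=
  exists kappa : R, 0 < kappa /\
    forall l : R, 1 <= l -> (P (void_event hat l) <= (kappa * l `^ (- alpha))%:E)%E.

End Defs.

(* Main.v *)
Require Import Defs.
From HB Require Import structures.
From mathcomp Require Import all_boot all_order all_algebra.
From mathcomp Require Import all_classical all_reals all_analysis.
From mathcomp Require Import measurable_realfun ess_sup_inf.
From mathcomp Require Import ring lra.
Import Order.TTheory GRing.Theory Num.Theory.
Import numFieldNormedType.Exports.
Set Implicit Arguments. Unset Strict Implicit. Unset Printing Implicit Defensive.
Local Open Scope classical_set_scope.
Local Open Scope ring_scope.

Section Geo.
Context {R : realType} {d : nat}.
Implicit Types (x y z : 'rV[R]_d).

Definition cb y (r : R) : set 'rV[R]_d := [set z | `|y - z| <= r].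

Lemma cb_borel y r : borelRd (cb y r).
Proof.
have cl : closed (cb y r) by exact: closed_closed_ball_.
have := closed_openC cl => /(@sub_sigma_algebra _ setT) op.
have := sigma_algebraCD op; rewrite setTD setCK; exact.
Qed.

Lemma coord_le_norm x i : `|x ord0 i| <= `|x|.
Proof.
rewrite [leRHS]/Num.norm /= mx_normrE.
by apply/bigmax_geP; right => /=; exists (ord0, i).
Qed.

Lemma norm_le_coord x a : 0 <= a -> (forall i, `|x ord0 i| <= a) -> `|x| <= a.
Proof.
move=> a0 H; rewrite [leLHS]/Num.norm /= mx_normrE.
apply/bigmax_leP; split => // -[i j] _ /=.
by rewrite (ord1 i); exact: H.
Qed.

Lemma box_norm a x : 0 <= a -> box a x <-> `|x| <= a.
Proof.
move=> a0; split.
  by move=> H; apply: norm_le_coord => // i; rewrite ler_norml; exact: H.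
by move=> H i; rewrite -ler_norml; exact: le_trans (coord_le_norm _ _) H.
Qed.

Lemma npts_eq0 (S A : set 'rV[R]_d) : npts S A = 0%E <-> S `&` A = set0.
Proof.
split; last by rewrite /npts => ->; rewrite esum_set0.
move=> H; apply: contrapT => /eqP /set0P [x Sx].
move: H; rewrite /npts; rewrite (esumID [set x]) //.
have -> : (S `&` A) `&` [set x] = [set x].
  by apply/seteqP; split => [z [] //|z -> //].
rewrite esum_set1 // => /eqP; rewrite padde_eq0 //.
- by case/andP; rewrite eqe oner_eq0.
- by apply: esum_ge0.
Qed.

End Geo.

Section Grid.
Context {R : realType} {d : nat}.

Definition gpt (s m : nat) (f : {ffun 'I_d -> 'I_m}) : 'rV[R]_d := \row_i ((s * f i)%:R).
Definition gL (s m : nat) : seq 'rV[R]_d := [seq gpt s f | f <- enum {ffun 'I_d -> 'I_m}].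

Lemma nat_dist (a b : nat) : a != b -> 1 <= `|a%:R - b%:R : R|.
Proof.
move=> ab; have [lt|lt|eq] := ltngtP a b; last by rewrite eq eqxx in ab.
- rewrite distrC ger0_norm; last by rewrite subr_ge0 ler_nat (ltnW lt).
  by rewrite -natrB ?(ltnW lt) // ler1n subn_gt0.
- rewrite ger0_norm; last by rewrite subr_ge0 ler_nat (ltnW lt).
  by rewrite -natrB ?(ltnW lt) // ler1n subn_gt0.
Qed.

Lemma gpt_sep s m (f g : {ffun 'I_d -> 'I_m}) : f != g -> s%:R <= `|gpt s f - gpt s g|.
Proof.
move=> fg; case: (pickP (fun i => f i != g i)) => [i fgi | H]; last first.
  have fgE : f = g by apply/ffunP => i; apply/eqP; move: (H i) => /negbFE.
  by rewrite fgE eqxx in fg.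
apply: le_trans (coord_le_norm _ i).
rewrite !mxE !natrM -mulrBr normrM [`|s%:R|]ger0_norm ?ler0n //.
rewrite -{1}[s%:R]mulr1 ler_wpM2l ?ler0n //; exact: nat_dist.
Qed.

Lemma gpt_norm s m (f : {ffun 'I_d -> 'I_m}) : `|gpt s f| <= (s * m.-1)%:R.
Proof.
apply: norm_le_coord => // i.
rewrite mxE ger0_norm // ler_nat leq_mul2l; apply/orP; right.
by rewrite -ltnS prednK // (leq_ltn_trans (leq0n _) (ltn_ord (f i))).
Qed.

Lemma gL_size s m : size (gL s m) = (m ^ d)%N.
Proof. by rewrite size_map -cardE card_ffun !card_ord. Qed.

Lemma gL_uniq s m : (0 < s)%N -> uniq (gL s m).
Proof.
move=> s0; rewrite map_inj_in_uniq ?enum_uniq // => f g _ _ E.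
apply/eqP; apply: contraT => fg; have := gpt_sep s fg.
by rewrite E subrr normr0 lern0 => /eqP s00; rewrite s00 in s0.
Qed.

Lemma gL_sep s m x y : x \in gL s m -> y \in gL s m -> x != y -> s%:R <= `|x - y|.
Proof.
move=> /mapP [f _ ->] /mapP [g _ ->] xy; apply: gpt_sep.
by apply: contraNneq xy => ->.
Qed.

Lemma gL_norm s m x : x \in gL s m -> `|x| <= (s * m.-1)%:R.
Proof. by move=> /mapP [f _ ->]; exact: gpt_norm. Qed.

Definition cpt (n : nat) (f : {ffun 'I_d -> 'I_(n + n).+1}) : 'rV[R]_d :=
  \row_i ((f i)%:R - n%:R).
Definition cL (n : nat) : seq 'rV[R]_d := [seq cpt f | f <- enum {ffun 'I_d -> 'I_(n + n).+1}].

Lemma cL_cover (n : nat) (y : 'rV[R]_d) : box n%:R y -> exists2 z, z \in cL n & `|z - y| <= 1/2.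
Proof.
move=> By.
pose tr i := Num.trunc (y ord0 i + n%:R + 1/2).
have t0 i : 0 <= y ord0 i + n%:R + 1/2.
  by have := By i; move=> /andP [h1 h2]; lra.
have trn i : (tr i < (n + n).+1)%N.
  rewrite ltnS truncn_le_nat.
  have -> : ((n + n).+1%:R : R) = n%:R + n%:R + 1 by rewrite -natr1 natrD.
  by have := By i; move=> /andP [h1 h2]; lra.
exists (@cpt n (finfun (fun i => inord (tr i)))).
  by apply: map_f; rewrite mem_enum.
apply: norm_le_coord => // i.
rewrite !mxE ffunE inordK // ler_norml.
have h1 : (tr i)%:R <= y ord0 i + n%:R + 1/2 by rewrite truncn_le t0.
have h2 : y ord0 i + n%:R + 1/2 < (tr i)%:R + 1.
  by rewrite natr1; exact: truncnS_gt.
apply/andP; split; lra.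
Qed.

End Grid.

Section Prob.
Context {R : realType} {d : nat} {dO : measure_display} {Omega : measurableType dO}
  (P : probability Omega R) (theta : 'rV[R]_d -> Omega -> Omega)
  (hat : Omega -> set 'rV[R]_d).
Context (Hspp : simple_point_process hat).

Definition Ev (y : 'rV[R]_d) : set Omega := [set w | hat w `&` cb y (1/2) = set0].
Definition EL (L : seq 'rV[R]_d) : set Omega := [set w | forall y, y \in L -> Ev y w].

Lemma Ev_npts y : Ev y = (fun w => npts (hat w) (cb y (1/2))) @^-1` [set 0%E].
Proof.
by apply/seteqP; split => w /=; rewrite npts_eq0.
Qed.

Lemma Ev_meas y : measurable (Ev y).
Proof.
rewrite Ev_npts -(setTI (_ @^-1` _)).
by apply: (Hspp.2 _ (cb_borel _ _)) => //; exact: emeasurable_set1.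
Qed.

Lemma EL_nil : EL [::] = setT.
Proof. by apply/seteqP; split => w //= _ y; rewrite in_nil. Qed.

Lemma EL_cons y L : EL (y :: L) = Ev y `&` EL L.
Proof.
apply/seteqP; split => w /=.
  by move=> H; split; [apply: H; rewrite mem_head | move=> z zL; apply: H; rewrite in_cons zL orbT].
by move=> [H1 H2] z; rewrite in_cons => /orP [/eqP -> //| /H2].
Qed.

Lemma EL_meas L : measurable (EL L).
Proof.
elim: L => [|y L IH]; first by rewrite EL_nil.
by rewrite EL_cons; apply: measurableI => //; exact: Ev_meas.
Qed.

Lemma box_cb (a : R) : 0 <= a -> box (d:=d) a = cb 0 a.
Proof.
move=> a0; apply/seteqP; split => z /=; rewrite /cb /= box_norm // sub0r normrN //.
Qed.

Lemma V_Ev0 : void_event hat (1/2) = Ev 0.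
Proof.
rewrite /void_event /Ev box_cb //; apply/seteqP; split => w /=; rewrite npts_eq0 //.
Qed.

Lemma void_box (l : R) : void_event hat l = [set w | hat w `&` box l = set0].
Proof. by rewrite /void_event; apply/seteqP; split => w /=; rewrite npts_eq0. Qed.

Lemma void_meas (l : R) : 0 <= l -> measurable (void_event hat l).
Proof.
move=> l0; rewrite -(setTI (void_event hat l)).
have hb : borelRd (box (d:=d) l) by rewrite box_cb //; exact: cb_borel.
exact: (Hspp.2 _ hb measurableT _ (emeasurable_set1 _)).
Qed.

Lemma P_full (Om E : set Omega) : measurable Om -> P Om = 1%E -> measurable E ->
  P E = P (E `&` Om).
Proof.
move=> mOm POm mE; rewrite (measureDI P mE mOm).
rewrite [X in (X + _)%E](_ : _ = 0%E); last first.
  apply/eqP; rewrite eq_le measure_ge0 andbT.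
  have : (P (E `\` Om) <= P (~` Om))%E.
    apply: le_measure; [rewrite inE; exact: measurableD| rewrite inE; exact: measurableC| by move=> w []].
  by rewrite probability_setC // POm subee.
by rewrite add0e.
Qed.

Context (Om : set Omega) (mOm : measurable Om) (POm : P Om = 1%E).

Lemma P_Om E : measurable E -> P E = P (E `&` Om).
Proof. exact: P_full. Qed.

Lemma P_eq_Om E F : measurable E -> measurable F -> E `&` Om = F `&` Om -> P E = P F.
Proof. by move=> mE mF H; rewrite P_Om // H -P_Om. Qed.

Context (Htr : forall x w, Om w -> hat (theta x w) = translate (hat w) x).

Lemma Ev_theta x z w : Om w -> Ev z (theta x w) <-> Ev (z + x) w.
Proof.
move=> Ow; rewrite /Ev /= Htr // !disjoints_subset; split.
  move=> H y hy cy; apply: (H (y - x)); first by exists y.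
  by rewrite /cb /= opprB addrA.
move=> H _ [y hy <-] cy; apply: (H y hy).
by move: cy; rewrite /cb /= opprB addrA.
Qed.

Lemma EL_theta x L w : Om w -> EL L (theta x w) <-> EL (map (fun y => y + x) L) w.
Proof.
move=> Ow; elim: L => [|y L IH] /=; first by rewrite EL_nil.
rewrite !EL_cons /=; split => -[H1 H2]; split.
- by rewrite -Ev_theta.
- by rewrite -IH.
- by rewrite Ev_theta.
- by rewrite IH.
Qed.

Context (Hthm : forall x, measurable_fun setT (theta x)).
Context (Hinv : forall x B, measurable B -> P (theta x @^-1` B) = P B).

Lemma P_EL_shift x L : P (EL (map (fun y => y + x) L)) = P (EL L).
Proof.
rewrite -(Hinv x (EL_meas L)); apply: P_eq_Om.
- exact: EL_meas.
- by rewrite -(setTI (_ @^-1` _)); apply: Hthm => //; exact: EL_meas.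
apply/seteqP; split => w [H1 H2]; split => //.
  exact/(EL_theta x L H2).
exact/(EL_theta x L H2).
Qed.


Lemma borel_setI (A B : set 'rV[R]_d) : borelRd A -> borelRd B -> borelRd (A `&` B).
Proof.
have [_ _ _ hI] := (sigma_algebraP (fun X _ => @subsetT _ X)).1
  (smallest_sigma_algebra setT [set U : set 'rV[R]_d | open U]).
exact: hI.
Qed.

Lemma borel_setT : borelRd (@setT 'rV[R]_d).
Proof.
have [hT _ _ _] := (sigma_algebraP (fun X _ => @subsetT _ X)).1
  (smallest_sigma_algebra setT [set U : set 'rV[R]_d | open U]).
exact: hT.
Qed.

Lemma tail_setI (a : R) (A B : set Omega) : tail_sigma hat a A -> tail_sigma hat a B ->
  tail_sigma hat a (A `&` B).
Proof.
have [_ _ _ hI] := (sigma_algebraP (fun X _ => @subsetT _ X)).1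
  (smallest_sigma_algebra setT [set S | exists A (E : set (\bar R)), borelRd A /\ measurable E /\
        S = (fun w => npts (hat w) (A `&` ~` box a)) @^-1` E]).
exact: hI.
Qed.

Lemma tail_setT (a : R) : tail_sigma hat a setT.
Proof.
have [hT _ _ _] := (sigma_algebraP (fun X _ => @subsetT _ X)).1
  (smallest_sigma_algebra setT [set S | exists A (E : set (\bar R)), borelRd A /\ measurable E /\
        S = (fun w => npts (hat w) (A `&` ~` box a)) @^-1` E]).
exact: hT.
Qed.

Lemma tail_meas (a : R) : 0 <= a -> tail_sigma hat a `<=` measurable.
Proof.
move=> a0; apply: smallest_sub; first exact: sigma_algebra_measurable.
move=> S [A [E [bA [mE ->]]]].
rewrite -(setTI (_ @^-1` _)); apply: (Hspp.2) => //.
apply: borel_setI => //; rewrite box_cb //.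
have := sigma_algebraCD (cb_borel (0 : 'rV[R]_d) a); rewrite setTD; exact.
Qed.

Lemma hat_empty : [set w | hat w = set0] = \bigcap_(n : nat) void_event hat n%:R.
Proof.
apply/seteqP; split => w /=.
  by move=> H n _; apply/npts_eq0; rewrite H set0I.
move=> H; apply/seteqP; split => [y hy|y []] //.
pose n := (Num.trunc `|y|).+1.
have /npts_eq0 := H n I; move=> /disjoints_subset /(_ y hy); apply.
rewrite box_norm // ltW //; exact: truncnS_gt.
Qed.

Lemma p_lt1 : P [set w | hat w = set0] = 0%E -> (P (void_event hat (1/2)) < 1)%E.
Proof.
move=> Hempty; rewrite ltNge; apply/negP => H1.
have PV : P (Ev 0) = 1%E.
  rewrite -V_Ev0; apply/eqP; rewrite eq_le H1 andbT probability_le1 //.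
  by rewrite V_Ev0; exact: Ev_meas.
have PEz : forall z, P (Ev z) = 1%E.
  move=> z; have := P_EL_shift z [:: 0]; rewrite /= add0r !EL_cons !EL_nil !setIT => ->.
  exact: PV.
have PEL : forall L, P (EL L) = 1%E.
  elim => [|y L IH]; first by rewrite EL_nil probability_setT.
  by rewrite EL_cons -(P_full (EL_meas L) IH (Ev_meas y)) PEz.
have Pn : forall n : nat, P (~` void_event hat n%:R) = 0%E.
  move=> n.
  have mVn : measurable (void_event hat n%:R) by apply: void_meas; exact: ler0n.
  rewrite probability_setC //.
  have -> : P (void_event hat n%:R) = 1%E.
    apply/eqP; rewrite eq_le probability_le1 //=.
    rewrite -(PEL (cL n)); apply: le_measure; rewrite ?inE; [exact: EL_meas| exact: mVn|].
    move=> w Hw; rewrite void_box; apply/disjoints_subset => y hy By.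
    have [z zL zy] := cL_cover By.
    have := Hw z zL; rewrite /Ev => /disjoints_subset /(_ y hy); apply.
    exact: zy.
  by rewrite subee.
have mE : measurable [set w | hat w = set0].
  by rewrite hat_empty; apply: bigcapT_measurable => n; exact: void_meas.
have mU : measurable (\bigcup_(n : nat) ~` void_event hat n%:R).
  by apply: bigcupT_measurable => n; apply: measurableC; exact: void_meas.
have : (P setT <= P [set w | hat w = set0] + P (\bigcup_(n : nat) ~` void_event hat n%:R))%E.
  apply: le_trans (measureU2 P mE mU); apply: le_measure; rewrite ?inE //.
  - exact: measurableU.
  - move=> w _; case: (pselect (hat w = set0)) => [h|h]; [by left|right].
    have h' : ~ (\bigcap_(n : nat) void_event hat n%:R) w.
      by move=> hw; apply: h; move: hw; rewrite -hat_empty.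
    apply: contrapT => Hn; apply: h' => n _; apply: contrapT => Hv; apply: Hn.
    by exists n.
have -> : P (\bigcup_(n : nat) ~` void_event hat n%:R) = 0%E.
  apply/eqP; rewrite eq_le measure_ge0 andbT.
  have mF : forall n : nat, measurable (~` void_event hat n%:R).
    by move=> n; apply: measurableC; apply: void_meas; exact: ler0n.
  have HH := measure_sigma_subadditive P mF mU (@subset_refl _ _).
  apply: le_trans HH _.
  by rewrite eseries0 // => i _ _; exact: Pn.
by rewrite Hempty probability_setT adde0 lee_fin ler10.
Qed.

Context (k : nat) (g : Omega -> R) (q : R) (q0 : 0 <= q)
  (Hg : cond_prob_version P (tail_sigma hat k%:R) (void_event hat (1/2)) g)
  (Hgq : {ae P, forall w, g w <= q}).

Lemma tail_Ev y : k%:R + 1/2 < `|y| -> tail_sigma hat k%:R (Ev y).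
Proof.
move=> yk; rewrite Ev_npts; apply: sub_sigma_algebra.
exists (cb y (1/2)), [set 0%E]; split; first exact: cb_borel.
split; first exact: emeasurable_set1.
rewrite setIidl //.
move=> z; rewrite /cb /= => yz; rewrite box_norm // => zk.
have : `|y| <= 1/2 + k%:R.
  by rewrite -[y](subrK z); apply: le_trans (ler_normD _ _) _; exact: lerD.
by rewrite addrC leNgt yk.
Qed.

Lemma tail_EL L : (forall y, y \in L -> k%:R + 1/2 < `|y|) -> tail_sigma hat k%:R (EL L).
Proof.
elim: L => [|y L IH] H; first by rewrite EL_nil; exact: tail_setT.
rewrite EL_cons; apply: tail_setI.
  by apply: tail_Ev; apply: H; rewrite mem_head.
by apply: IH => z zL; apply: H; rewrite in_cons zL orbT.
Qed.

Lemma step L : (forall y, y \in L -> k%:R + 1/2 < `|y|) ->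
  (P (Ev 0 `&` EL L) <= q%:E * P (EL L))%E.
Proof.
move=> HL.
have tL := tail_EL HL.
have mL := EL_meas L.
rewrite -V_Ev0 -(Hg.2.2 _ tL).
rewrite integralE.
apply: le_trans (geeDl _ _) _.
  by rewrite oppe_le0; apply: integral_ge0 => x _; exact: funeneg_ge0.
rewrite -integral_cst //.
have mg : measurable_fun setT (EFin \o g) := measurable_int _ Hg.2.1.
have mf1 : measurable_fun (EL L) (funepos (EFin \o g)).
  by apply: measurable_funepos; exact: measurable_funS mg.
have f20 : forall x, EL L x -> (0 <= cst q%:E x)%E by move=> x _; rewrite lee_fin.
apply: (@ae_ge0_le_integral _ _ _ P (EL L) mL _ _ (fun x _ => funepos_ge0 _ x) mf1 f20 (measurable_cst _)).
- apply: filterS Hgq => w gw _ /=.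
  by rewrite funeposE ge_max !lee_fin gw q0.
Qed.

Lemma bound L : uniq L ->
  (forall x y, x \in L -> y \in L -> x != y -> k%:R + 1/2 < `|x - y|) ->
  (P (EL L) <= (q ^+ size L)%:E)%E.
Proof.
elim: L => [|x L IH] /= Hu Hsep.
  by rewrite EL_nil probability_setT expr0.
move: Hu => /andP [xL uL].
set L' := map (fun y => y - x) L.
have E2 : [seq y + x | y <- L'] = L.
  by rewrite /L' -map_comp; apply: map_id_in => y _ /=; rewrite subrK.
have E1 : x :: L = map (fun y => y + x) (0 :: L') by rewrite /= add0r E2.
rewrite E1 P_EL_shift EL_cons.
apply: le_trans (step _) _.
  move=> y' /mapP [y yL ->]; apply: Hsep; rewrite ?mem_head ?in_cons ?yL ?orbT //.
  by apply/negP => /eqP yx; rewrite -yx yL in xL.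
rewrite -(P_EL_shift x L') E2 exprS EFinM.
apply: lee_wpmul2l; first by rewrite lee_fin.
apply: IH => // a b aL bL; apply: Hsep; rewrite in_cons ?aL ?bL orbT //.
Qed.

End Prob.

Theorem proposition4p7 (R : realType) (d : nat) (dO : measure_display)
  (Omega : measurableType dO) (P : probability Omega R)
  (theta : 'rV[R]_d -> Omega -> Omega) (hat : Omega -> set 'rV[R]_d) :
  measurable_action theta ->
  simple_point_process hat ->
  A1 P theta hat -> A2 P hat -> A3 P theta hat ->
  (exists g : nat -> Omega -> R,
     (forall k : nat, cond_prob_version P (tail_sigma hat k%:R)
                        (void_event hat (1 / 2)) (g k)) /\
     ((fun k : nat => ess_sup P
         (fun w => (`| g k w - fine (P (void_event hat (1 / 2))) |)%:E))
        @ \oo --> 0%E)) ->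
  (exists c : R, 0 < c /\
     forall l : R, 1 <= l -> (P (void_event hat l) <= (expR (- (c * l ^+ d)))%:E)%E)
  /\ (forall alpha : R, 0 < alpha -> condC P hat alpha).
Proof.
move=> [_ [_ [Hthm _]]] Hspp [Hinv Hempty] _ [Om [mOm [POm [_ Htr]]]] [g [Hg Hcvg]].
have mV : measurable (void_event hat (1/2)).
  by apply: (void_meas Hspp); lra.
have [p [p0 p1 pE]] : exists p : R, [/\ 0 <= p, p < 1 & P (void_event hat (1/2)) = p%:E].
  have pE_le1 := probability_le1 P mV.
  have pEfin : P (void_event hat (1/2)) = (fine (P (void_event hat (1/2))))%:E.
    by rewrite fineK // ge0_fin_numE // (le_lt_trans pE_le1) // ltry.
  exists (fine (P (void_event hat (1/2)))); split => //.
  - by rewrite fine_ge0.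
  - have := p_lt1 Hspp mOm POm Htr Hthm Hinv Hempty.
    by rewrite pEfin lte_fin.
rewrite pE /= in Hcvg.
pose q := (1 + p) / 2.
have q0 : 0 <= q by rewrite /q; lra.
have qpos : 0 < q by rewrite /q; lra.
have q1 : q < 1 by rewrite /q; lra.
have [k Hk] : exists k, (ess_sup P (fun w => (`|g k w - p|)%:E) < (q - p)%:E)%E.
  have nb : nbhs (0%E : \bar R) [set y | (y < (q - p)%:E)%E].
    apply: open_nbhs_nbhs; split; first exact: open_ereal_lt_ereal.
    by rewrite /= lte_fin /q; lra.
  have [N _ HN] := Hcvg _ nb.
  by exists N; apply: (HN N) => /=.
have Hgq : {ae P, forall w, g k w <= q}.
  apply: filterS (ess_sup_ge P (fun w => (`|g k w - p|)%:E)) => w /= Hw.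
  have h : `|g k w - p| <= q - p by rewrite -lee_fin; apply: le_trans Hw (ltW Hk).
  have := ler_norm (g k w - p); lra.
pose s := k.+1.
have s0 : (0 < s)%N by [].
have spos : 0 < s%:R :> R by rewrite ltr0n.
have sep : forall m (x y : 'rV[R]_d), x \in gL s m -> y \in gL s m -> x != y -> k%:R + 1/2 < `|x - y| :> R.
  move=> m x y xL yL xy; apply: (lt_le_trans _ (gL_sep xL yL xy)).
  have -> : (s%:R : R) = k%:R + 1 by rewrite /s natr1.
  lra.
have key : forall l, 1 <= l -> (P (void_event hat l) <=
    (q ^+ ((Num.trunc ((l - 1/2) / s%:R)).+1 ^ d))%:E)%E.
  move=> l l1; set t := Num.trunc ((l - 1/2) / s%:R).
  have ht : 0 <= (l - 1/2) / s%:R by apply: divr_ge0; [lra | exact: ltW].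
  have tle : s%:R * t%:R <= l - 1/2 by rewrite mulrC -ler_pdivlMr // truncn_le ht.
  apply: (@le_trans _ _ (P (EL hat (gL s t.+1)))).
    apply: le_measure; rewrite ?inE; [apply: (void_meas Hspp); lra | exact: EL_meas | ].
    move=> w; rewrite void_box => /= Hw y yL; rewrite /Ev /=.
    apply/disjoints_subset => z hz cz.
    move/disjoints_subset: Hw => /(_ z hz); apply.
    rewrite box_norm; last lra.
    have ny := gL_norm yL; rewrite /= natrM in ny.
    have nz : `|z| <= `|y| + `|y - z| by rewrite -{1}(subKr y z); exact: ler_normB.
    move: cz; rewrite /cb /= => cz.
    lra.
  have := bound Hspp mOm POm Htr Hthm Hinv q0 (Hg k) Hgq (@gL_uniq R d s t.+1 s0) (sep t.+1).
  by rewrite gL_size.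
have part1 : exists c : R, 0 < c /\
     forall l : R, 1 <= l -> (P (void_event hat l) <= (expR (- (c * l ^+ d)))%:E)%E.
  pose c := - ln q / (2 * s%:R) ^+ d.
  have lnq : ln q < 0 by rewrite ln_lt0 // qpos q1.
  have s2 : 0 < 2 * s%:R :> R by rewrite mulr_gt0.
  have c0 : 0 < c by rewrite /c divr_gt0 // ?oppr_gt0 // exprn_gt0.
  exists c; split => // l l1.
  apply: le_trans (key l l1) _; rewrite lee_fin.
  set m := (Num.trunc _).+1.
  have -> : q ^+ (m ^ d) = expR ((m ^ d)%:R * ln q) by rewrite expRM_natl lnK // posrE.
  rewrite ler_expR.
  have -> : - (c * l ^+ d) = (l / (2 * s%:R)) ^+ d * ln q.
    rewrite /c expr_div_n; field.
    by rewrite expf_neq0 // gt_eqF.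
  apply: ler_wnM2r; first exact: ltW.
  rewrite natrX; apply: lerXn2r; rewrite ?nnegrE //.
  - by apply: divr_ge0; [lra | exact: ltW].
  have e1 : l / (2 * s%:R) = (l / 2) * s%:R^-1 by field; rewrite gt_eqF.
  have e2 : (l - 1/2) / s%:R < m%:R by exact: truncnS_gt.
  rewrite e1; apply: le_trans (ltW e2).
  by rewrite ler_wpM2r // ?invr_ge0 ?ler0n //; lra.
split => // alpha a0.
have [d0|dpos] := eqVneq d 0%N.
  exists 1; split => // l l1.
  have -> : void_event hat l = [set w | hat w = set0].
    have bT : box (d:=d) l = setT.
      apply/seteqP; split => // x _ i; exfalso; have := ltn_ord i.
      by rewrite {2}d0.
    by rewrite void_box bT; apply/seteqP; split => w /=; rewrite setIT.
  by rewrite Hempty lee_fin mul1r powR_ge0.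
have [c [c0 Hc]] := part1.
pose N := (Num.trunc alpha).+1.
have cN : 0 < c ^+ N by rewrite exprn_gt0.
exists (N`!%:R / c ^+ N); split.
  by rewrite divr_gt0 // ltr0n fact_gt0.
move=> l l1; apply: le_trans (Hc l l1) _; rewrite lee_fin.
have lpos : 0 < l by lra.
have Apos : 0 < l `^ alpha by rewrite powR_gt0.
have lN : l `^ alpha <= l ^+ N.
  rewrite -powR_mulrn; last lra.
  by apply: ler_powR => //; apply: ltW; exact: truncnS_gt.
have eB : (c * l) ^+ N / N`!%:R <= expR (c * l).
  have cl0 : 0 <= c * l by rewrite mulr_ge0 // ltW.
  have h := expR_ge1Dxn (Num.trunc alpha) cl0.
  by apply: le_trans h; rewrite /N addrC lerDl.
have eC : expR (c * l) <= expR (c * l ^+ d).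
  rewrite ler_expR; apply: ler_wpM2l; first exact: ltW.
  by apply: ler_eXnr => //; rewrite lt0n.
rewrite powRN expRN -invf_div lef_pV2 ?posrE ?expR_gt0 ?divr_gt0 // ?ltr0n ?fact_gt0 //.
apply: le_trans (ler_wpM2r _ lN) _.
  by rewrite invr_ge0 ltW // divr_gt0 // ltr0n fact_gt0.
have -> : l ^+ N * (N`!%:R / c ^+ N)^-1 = (c * l) ^+ N / N`!%:R.
  rewrite invf_div exprMn; field.
  by rewrite gt_eqF // ?ltr0n ?fact_gt0.
exact: le_trans eB eC.
Qed.
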